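(* Let $X$ be a super $X$-set parameter and let $G$ be a graph of order $n$. Then: (1) $X(G)\le\underline{x_0}(G)\le x_0(G)$; (2) if $G$ has only one minimal $X$-set, then $X(G)=\underline{x_0}(G)=x_0(G)$; (3) if $G$ has more than one minimal $X$-set, then $\overline{X}(G)+1\le x_0(G)\le\min\{\overline{X}(G)+X(G),\,n\}$; (4) if $G$ has more than one minimum $X$-set, then $X(G)+1\le\underline{x_0}(G)$.
   Context: All graphs are finite, simple, undirected, with nonempty vertex set. A super $X$-set parameter $X$ assigns to each graph $G$ a family of subsets of $V(G)$, called the $X$-sets of $G$, such that: every graph isomorphism maps $X$-sets to $X$-sets; every graph has at least one $X$-set; and (Superset) if $S$ is an $X$-set of $G$ and $S\subseteq S'\subseteq V(G)$, then $S'$ is an $X$-set of $G$. $X(G)$ is the minimum cardinality of an $X$-set; $\overline{X}(G)$ is the maximum cardinality of a minimal (w.r.t. inclusion) $X$-set. The $X$-TAR graph $\mathfrak{X}(G)$ has as vertices the $X$-sets of $G$, with $S_1S_2$ an edge iff $|S_1\ominus S_2|=1$. $\mathfrak{X}_k(G)$ is the subgraph of $\mathfrak{X}(G)$ induced by the $X$-sets of cardinality at most $k$ (a graph with no vertices is not regarded as connected). $x_0(G)$ is the least $k_0$ such that $\mathfrak{X}_k(G)$ is connected for all $k\ge k_0$, and $\underline{x_0}(G)$ is the least $k$ such that $\mathfrak{X}_k(G)$ is connected. *)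

(* Defs.v *)
From mathcomp Require Import all_boot.
Set Implicit Arguments. Unset Strict Implicit. Unset Printing Implicit Defensive.

Definition is_graph (T : finType) (e : rel T) : Prop :=
  [/\ symmetric e, irreflexive e & 0 < #|T|].

Definition graph_iso (T T' : finType) (e : rel T) (e' : rel T') (f : T -> T') : Prop :=
  bijective f /\ (forall x y, e' (f x) (f y) = e x y).

Record superX := SuperX {
  Xsets : forall T : finType, rel T -> {set {set T}};
  Xsets_iso : forall (T T' : finType) (e : rel T) (e' : rel T') (f : T -> T'),
      is_graph e -> is_graph e' -> graph_iso e e' f ->
      forall S, S \in Xsets e -> f @: S \in Xsets e';
  Xsets_nonempty : forall (T : finType) (e : rel T), is_graph e ->
      exists S, S \in Xsets e;
  Xsets_superset : forall (T : finType) (e : rel T), is_graph e ->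
      forall S S' : {set T}, S \in Xsets e -> S \subset S' -> S' \in Xsets e
}.

Section Params.
Variables (X : superX) (T : finType) (e : rel T).

Definition isXset (S : {set T}) : bool := S \in Xsets X e.

(* X(G): minimum cardinality of an X-set (#|T| is an upper bound / default). *)
Definition Xnum : nat := \big[minn/#|T|]_(S in Xsets X e) #|S|.

Definition minimalX (S : {set T}) : bool := minset isXset S.

Definition Xbar : nat := \max_(S | minimalX S) #|S|.

Definition minimumX (S : {set T}) : bool := isXset S && (#|S| == Xnum).

Definition symdiff (A B : {set T}) : {set T} := (A :\: B) :|: (B :\: A).

(* Edge relation of the TAR graph X_k(G): induced on X-sets of size <= k. *)
Definition tar_k (k : nat) : rel {set T} := fun S1 S2 =>
  [&& isXset S1, isXset S2, #|S1| <= k, #|S2| <= k & #|symdiff S1 S2| == 1].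

Definition tar_vertex (k : nat) (S : {set T}) : bool := isXset S && (#|S| <= k).

Definition tar_connected (k : nat) : Prop :=
  (exists S, tar_vertex k S) /\
  (forall S1 S2, tar_vertex k S1 -> tar_vertex k S2 -> connect (tar_k k) S1 S2).

Definition is_x0 (k0 : nat) : Prop :=
  (forall k, k0 <= k -> tar_connected k) /\
  (forall k1, (forall k, k1 <= k -> tar_connected k) -> k0 <= k1).

Definition is_lx0 (k0 : nat) : Prop :=
  tar_connected k0 /\ (forall k1, tar_connected k1 -> k0 <= k1).

End Params.

(* Main.v *)
Require Import Defs.
From mathcomp Require Import all_boot.
From mathcomp Require Import zify.
From Stdlib Require Import Classical.

Set Implicit Arguments. Unset Strict Implicit. Unset Printing Implicit Defensive.

Lemma ex_least (P : nat -> Prop) n : P n -> exists m, P m /\ forall k, P k -> m <= k.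
Proof.
elim: n {-2}n (leqnn n) => [|N IH] n Hn Pn.
  exists n; split=> // k _; by move: Hn; rewrite leqn0 => /eqP->.
case: (classic (exists k, k < n /\ P k)) => [[k [Hk Pk]]|H].
  apply: (IH k) => //; rewrite -ltnS; exact: leq_trans Hk Hn.
exists n; split=> // k Pk; rewrite leqNgt; apply/negP => Hk; apply: H; by exists k.
Qed.

Section Proof.
Variables (X : superX) (T : finType) (e : rel T).
Hypothesis Hg : is_graph e.

Lemma sup (S S' : {set T}) : isXset X e S -> S \subset S' -> isXset X e S'.
Proof. exact: Xsets_superset. Qed.

Lemma Xnum_le S : isXset X e S -> Xnum X e <= #|S|.
Proof.
rewrite /Xnum /isXset => HS.
have : S \in index_enum {set T} by rewrite mem_index_enum.
move: (index_enum _) => r.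
elim: r => [//|x r IH]; rewrite inE big_cons => /orP [/eqP<-|Hr].
  by rewrite HS geq_minl.
case: ifP => _; last exact: IH.
by rewrite geq_min IH ?orbT.
Qed.

Lemma Xnum_ex : exists S, isXset X e S /\ #|S| = Xnum X e.
Proof.
rewrite /Xnum.
apply: (big_ind (fun x => exists S, isXset X e S /\ #|S| = x)).
- exists setT; split; last by rewrite cardsT.
  have [S HS] := Xsets_nonempty X Hg; exact: sup HS (subsetT S).
- move=> x y [S [H1 H2]] [S' [H1' H2']].
  rewrite /minn; case: ifP => _; [by exists S | by exists S'].
- move=> S HS; by exists S.
Qed.

Lemma tar_sym k : symmetric (tar_k X e k).
Proof.
move=> S1 S2; rewrite /tar_k /symdiff setUC.
by case: (isXset X e S1); case: (isXset X e S2); case: (#|S1| <= k); case: (#|S2| <= k).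
Qed.

Lemma chain k A : isXset X e A -> forall B : {set T}, A \subset B -> #|B| <= k ->
  connect (tar_k X e k) B A.
Proof.
move=> HA B HAB0 HBk0; have [n Hn0] : exists n, #|B| <= n by exists #|B|.
elim: n B Hn0 HAB0 HBk0 => [|n IH] B Hn HAB HBk.
  have -> : B = A.
    apply/eqP; rewrite eqEsubset HAB andbT.
    move: Hn; rewrite leqn0 cards_eq0 => /eqP->; exact: sub0set.
  exact: connect0.
case: (boolP (B \subset A)) => [HBA|].
  have -> : B = A by apply/eqP; rewrite eqEsubset HAB HBA.
  exact: connect0.
case/subsetPn => x xB xA.
have HAB' : A \subset B :\ x.
  apply/subsetP => y yA; rewrite !inE (subsetP HAB) // andbT.
  by apply/eqP => Exy; rewrite -Exy yA in xA.
have Hc := cardsD1 x B; rewrite xB /= in Hc.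
apply: connect_trans (IH (B :\ x) _ HAB' _).
- apply: connect1; rewrite /tar_k (sup HA HAB) (sup HA HAB') HBk /=.
  rewrite (leq_trans _ HBk) ?Hc ?leqnSn //=.
  have -> : symdiff B (B :\ x) = [set x].
    apply/setP => y; rewrite !inE.
    by case: (y =P x) => [->|_]; rewrite ?xB //=; case: (y \in B).
  by rewrite cards1.
- by move: Hn; rewrite Hc.
- by rewrite (leq_trans _ HBk) // Hc leqnSn.
Qed.

Lemma hub k H : tar_vertex X e k H ->
  (forall S, tar_vertex X e k S -> connect (tar_k X e k) S H) -> tar_connected X e k.
Proof.
move=> HH Hc; split; first by exists H.
move=> S1 S2 H1 H2; apply: connect_trans (Hc _ H1) _.
rewrite (sym_connect_sym (@tar_sym k)); exact: Hc.
Qed.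

Lemma conn_big k : #|T| <= k -> tar_connected X e k.
Proof.
move=> Hk; have [S HS] := Xsets_nonempty X Hg.
have HT : isXset X e setT := sup HS (subsetT S).
apply: (@hub k setT); first by rewrite /tar_vertex HT cardsT.
move=> S' /andP [H1 H2]; rewrite (sym_connect_sym (@tar_sym k)).
apply: chain => //; rewrite ?subsetT ?cardsT //.
Qed.

Lemma step k S S' : tar_k X e k S S' -> #|S| = k -> S' \subset S /\ #|S'| < #|S|.
Proof.
case/and5P => _ _ _ H2 /eqP H1 Hk.
have := cardsID S' S; have := cardsID S S'.
rewrite /symdiff cardsU in H1.
have E0 : (S :\: S') :&: (S' :\: S) = set0.
  apply/setP => y; rewrite !inE; by case: (y \in S); case: (y \in S').
rewrite E0 cards0 subn0 setIC in H1 * => E1 E2.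
have E : #|S' :\: S| = 0 by lia.
split; first by rewrite -setD_eq0 -cards_eq0 E.
lia.
Qed.

Lemma isolated k M M' : (forall y, ~~ tar_k X e k M y) -> connect (tar_k X e k) M M' -> M' = M.
Proof.
move=> Hi /connectP [[|y p] /= Hp ->] //.
by case/andP: Hp => Hy _; move: (Hi y); rewrite Hy.
Qed.

Lemma has_minimal S : isXset X e S -> exists2 M, minimalX X e M & M \subset S.
Proof. move=> HS; have [M H1 H2] := minset_exists HS; by exists M. Qed.

Lemma minimal_X M : minimalX X e M -> isXset X e M.
Proof. by case/minsetP. Qed.

End Proof.

Theorem proposition2p31 (X : superX) (T : finType) (e : rel T) :
  is_graph e ->
  (exists a, is_x0 X e a) /\ (exists b, is_lx0 X e b) /\
  forall a b, is_x0 X e a -> is_lx0 X e b ->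
    let n := #|T| in
    [/\ Xnum X e <= b <= a,
        #|[set S | minimalX X e S]| = 1 -> Xnum X e = b /\ b = a,
        1 < #|[set S | minimalX X e S]| ->
          Xbar X e + 1 <= a <= minn (Xbar X e + Xnum X e) n
      & 1 < #|[set S | minimumX X e S]| -> Xnum X e + 1 <= b].
Proof.
move=> Hg.
have Pa : forall k, #|T| <= k -> tar_connected X e k.
  move=> k Hk; exact: (conn_big X Hg Hk).
split.
  have [m [H1 H2]] := @ex_least (fun k0 => forall k, k0 <= k -> tar_connected X e k) #|T| Pa.
  by exists m; split.
split.
  have [m [H1 H2]] := @ex_least (tar_connected X e) #|T| (Pa _ (leqnn _)).
  by exists m; split.
move=> a b [Ha1 Ha2] [Hb1 Hb2] n.
have Xb : Xnum X e <= b.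
  case: Hb1 => [[S /andP [HS HSb]] _]; exact: leq_trans (Xnum_le HS) HSb.
have ba : b <= a by apply: Hb2; apply: Ha1.
have [M0 [HM0 cM0]] := Xnum_ex X Hg.
split.
- by rewrite Xb ba.
- move=> /eqP /cards1P [M EM].
  have uniq : forall S, minimalX X e S -> S = M.
    by move=> S HS; apply/set1P; rewrite -EM inE.
  have [M1 HM1 sub1] := has_minimal HM0.
  have cM : #|M| <= Xnum X e by rewrite -(uniq _ HM1) -cM0 subset_leq_card.
  suff : a <= Xnum X e by move=> H; split; apply/eqP; rewrite eqn_leq ?Xb //;
    [exact: leq_trans ba H | rewrite ba; exact: leq_trans H Xb].
  apply: Ha2 => k Hk.
  apply: (@hub X T e k M).
    rewrite /tar_vertex (leq_trans cM Hk) andbT -(uniq _ HM1); exact: minimal_X.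
  move=> S /andP [HS HSk].
  have [M2 HM2 sub2] := has_minimal HS.
  rewrite (uniq _ HM2) in sub2.
  apply: chain => //; rewrite -(uniq _ HM1); exact: minimal_X.
- move=> /card_gt1P [M1 [M2 [H1 H2 H12]]].
  rewrite !inE in H1 H2.
  have Hpos : 0 < #|[pred S | minimalX X e S]|.
    by apply/card_gt0P; exists M1.
  have [M HM EM] := eq_bigmax_cond (fun S : {set T} => #|S|) Hpos.
  rewrite inE in HM.
  apply/andP; split.
    rewrite addn1 ltnNge; apply/negP => Hle.
    have Hc := Ha1 _ Hle.
    have [M' [HM' HM'M]] : exists M', minimalX X e M' /\ M' != M.
      case: (M1 =P M) => [E|/eqP]; last by exists M1.
      by exists M2; split => //; rewrite -E eq_sym.
    case: Hc => _ Hc.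
    have Xbar_eq : Xbar X e = #|M| by rewrite /Xbar -EM.
    have V : tar_vertex X e (Xbar X e) M by rewrite /tar_vertex (minimal_X HM) Xbar_eq /=.
    have V' : tar_vertex X e (Xbar X e) M'.
      by rewrite /tar_vertex (minimal_X HM') (@leq_bigmax_cond _ (minimalX X e) (fun S : {set T} => #|S|) M' HM').
    move/eqP: HM'M => HM'M; apply: HM'M; apply: (isolated _ (Hc _ _ V V')) => y.
    apply/negP => Hy.
    have [sy cy] := step Hy (esym Xbar_eq).
    case/minsetP: HM => _ Hmin.
    have := Hmin y; rewrite sy => /(_ _ isT) Ey.
    case/and5P: Hy => _ Hy _ _ _.
    by move: cy; rewrite Ey // ltnn.
  rewrite leq_min; apply/andP; split; last by apply: Ha2 => k; apply: Pa.
  apply: Ha2 => k Hk.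
  apply: (@hub X T e k M0).
    by rewrite /tar_vertex HM0 cM0 (leq_trans _ Hk) // leq_addl.
  move=> S /andP [HS HSk].
  have [M3 HM3 sub3] := has_minimal HS.
  have XM3 := minimal_X HM3.
  apply: connect_trans (chain Hg XM3 sub3 HSk) _.
  have Hu : #|M3 :|: M0| <= k.
    apply: leq_trans Hk; rewrite cardsU cM0; apply: leq_trans (leq_subr _ _) _.
    by rewrite leq_add2r (@leq_bigmax_cond _ (minimalX X e) (fun S : {set T} => #|S|) M3 HM3).
  apply: connect_trans (_ : connect _ _ (M3 :|: M0)) (chain Hg HM0 (subsetUr _ _) Hu).
  rewrite (sym_connect_sym (tar_sym X e k)).
  apply: (chain Hg XM3 _ Hu); exact: subsetUl.
- move=> /card_gt1P [M1 [M2 [H1 H2 H12]]].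
  rewrite !inE in H1 H2.
  case/andP: H1 => X1 /eqP c1; case/andP: H2 => X2 /eqP c2.
  rewrite addn1 ltn_neqAle Xb andbT; apply/negP => /eqP Eb.
  case: Hb1 => _ Hc; rewrite -Eb in Hc.
  have V1 : tar_vertex X e (Xnum X e) M1 by rewrite /tar_vertex X1 c1 /=.
  have V2 : tar_vertex X e (Xnum X e) M2 by rewrite /tar_vertex X2 c2 /=.
  move/eqP: H12 => H12; apply: H12; apply/esym; apply: isolated (Hc _ _ V1 V2).
  move=> y; apply/negP => Hy.
  have [_ cy] := step Hy c1.
  case/and5P: Hy => _ Hy _ _ _.
  by move: (Xnum_le Hy); rewrite leqNgt -c1 cy.
Qed.
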